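(* Let $\pi>0$, $\bar d>0$, $0<\theta_1<\dots<\theta_K$, $0\le\beta_1<\dots<\beta_M\le1$, and let $A:[0,D]\to[0,\bar d]$ be continuously differentiable. Enumerate the $KM$ types $(\beta_m,\theta_k)$ as $\Lambda_1,\dots,\Lambda_{KM}$; write $L(Q,\beta,\theta)=\theta[\bar d-\beta A(Q)]-\pi(1-\beta)A(Q)$, $\bar S(Q,\Pi,\Lambda)=L(Q,\Lambda)-\Pi$ and $\sigma(Q,\beta,\theta)=-[\theta\beta+\pi(1-\beta)]A'(Q)$. Let $\Phi=\{(Q_i,\Pi_i)\}_{i=1}^{KM}$ with $Q_i\in[0,D]$ be a feasible contract, i.e. $\bar S(Q_i,\Pi_i,\Lambda_i)\ge0$ for all $i$ and $\bar S(Q_i,\Pi_i,\Lambda_i)\ge\bar S(Q_j,\Pi_j,\Lambda_i)$ for all $i\ne j$. If $\sigma(Q,\Lambda_i)>\sigma(Q,\Lambda_j)$ for all $Q\in[0,D]$, then $Q_i\ge Q_j$.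
   Context: Model: an operator offers one item (data cap $Q_i$, subscription fee $\Pi_i$) for each user type $\Lambda_i=(\beta,\theta)$ (network substitutability $\beta$, data valuation $\theta$). $\pi$ is the overage price, $\bar d$ the mean demand, $A(Q)$ the expected overage consumption under cap $Q$ (decreasing, convex). $L$ is the virtual payoff, $\bar S$ the expected payoff, and $\sigma=\partial L/\partial Q$ is the user's willingness-to-pay (marginal rate of substitution). *)

(* Defs.v *)
From Stdlib Require Import Reals Lra.
From Coquelicot Require Import Coquelicot.
From mathcomp Require Import ssreflect ssrfun ssrbool eqtype ssrnat fintype.
Open Scope R_scope.

Definition Lpay (pi dbar : R) (A : R -> R) (Q beta theta : R) : R :=
  theta * (dbar - beta * A Q) - pi * (1 - beta) * A Q.

Definition Spay (pi dbar : R) (A : R -> R) (Q Pi beta theta : R) : R :=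
  Lpay pi dbar A Q beta theta - Pi.

Definition wtp (pi : R) (A : R -> R) (Q beta theta : R) : R :=
  - (theta * beta + pi * (1 - beta)) * Derive A Q.

(* Main.v *)
Require Import Defs.
From Stdlib Require Import Reals Lra Classical.
From Coquelicot Require Import Coquelicot.
From mathcomp Require Import ssreflect ssrfun ssrbool eqtype ssrnat fintype.
Open Scope R_scope.

Theorem lemma4
  (pi dbar D : R) (K M : nat)
  (theta : 'I_K -> R) (beta : 'I_M -> R) (A : R -> R)
  (e : 'I_(K * M) -> 'I_M * 'I_K)
  (Q Pi : 'I_(K * M) -> R) :
  0 < pi -> 0 < dbar ->
  (forall k : 'I_K, 0 < theta k) ->
  (forall k1 k2 : 'I_K, (k1 < k2)%N -> theta k1 < theta k2) ->
  (forall m : 'I_M, 0 <= beta m <= 1) ->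
  (forall m1 m2 : 'I_M, (m1 < m2)%N -> beta m1 < beta m2) ->
  (forall x, 0 <= x <= D -> 0 <= A x <= dbar) ->
  (forall x, 0 <= x <= D -> ex_derive A x /\ continuous (Derive A) x) ->
  bijective e ->
  (forall i, 0 <= Q i <= D) ->
  (forall i, 0 <= Spay pi dbar A (Q i) (Pi i) (beta (e i).1) (theta (e i).2)) ->
  (forall i j, i <> j ->
     Spay pi dbar A (Q i) (Pi i) (beta (e i).1) (theta (e i).2)
     >= Spay pi dbar A (Q j) (Pi j) (beta (e i).1) (theta (e i).2)) ->
  forall i j : 'I_(K * M),
    (forall x, 0 <= x <= D ->
       wtp pi A x (beta (e i).1) (theta (e i).2)
       > wtp pi A x (beta (e j).1) (theta (e j).2)) ->
    Q i >= Q j.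
Proof.
move=> Hpi Hd Ht _ Hb _ HA HAd _ HQ _ HIC i j Hw.
destruct (classic (i = j)) as [->|Hij]; first lra.
have H1 := HIC i j Hij.
have H2 := HIC j i (fun h => Hij (esym h)).
move: H1 H2 Hw; rewrite /Spay /Lpay /wtp.
set bi := beta (e i).1; set ti := theta (e i).2.
set bj := beta (e j).1; set tj := theta (e j).2.
move=> H1 H2 Hw.
apply: Rnot_lt_ge => Hlt.
set c := (tj * bj + pi * (1 - bj)) - (ti * bi + pi * (1 - bi)).
have Hmin : Rmin (Q i) (Q j) = Q i by rewrite Rmin_left; lra.
have Hmax : Rmax (Q i) (Q j) = Q j by rewrite Rmax_right; lra.
have HQi := HQ i; have HQj := HQ j.
have HM1 : forall x, Rmin (Q i) (Q j) < x < Rmax (Q i) (Q j) ->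
    is_derive (fun x0 : R => c * A x0) x (c * Derive A x).
  rewrite Hmin Hmax => x Hx1. apply: is_derive_scal. apply: Derive_correct.
  apply HAd. lra.
have HM2 : forall x, Rmin (Q i) (Q j) <= x <= Rmax (Q i) (Q j) ->
    continuity_pt (fun x0 : R => c * A x0) x.
  rewrite Hmin Hmax => x Hx1. apply continuity_pt_filterlim.
  apply: (ex_derive_continuous (fun x => c * A x)).
  apply: ex_derive_scal. apply HAd. lra.
have [x [Hx Heq]] := MVT_gen (fun x => c * A x) (Q i) (Q j) (fun x => c * Derive A x) HM1 HM2.
move: Hx; rewrite Hmin Hmax => Hx.
have Hx' : 0 <= x <= D by lra.
have Hg := Hw x Hx'.
have Hpos : 0 < (c * Derive A x) by rewrite /c; lra.
have : 0 < c * Derive A x * (Q j - Q i) by apply Rmult_lt_0_compat; lra.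
rewrite -Heq /c. lra.
Qed.
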